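(* Let $F=\langle f_1,\ldots,f_k\rangle$ be a normalized solution to an instance $(\mathcal{T}_{initial},\mathcal{T}_{final},k)$ of Flip Distance, and let $C$ be a component of $\mathcal{D}_F$. Let $f_i$ and $f_h$, with $i<h$, be two flips in $C$ such that $\phi(f_h)=\epsilon(f_i)$ and $\epsilon(f_i)$ is not flipped between $f_i$ and $f_h$ (i.e., there is no $p$ with $i<p<h$ and $\epsilon(f_p)=\epsilon(f_i)$). Then there is a directed path from $f_i$ to $f_h$ in $C$.
   Context: A triangulation of a finite point set $\mathcal{P}$ in the plane is a partition of the convex hull of $\mathcal{P}$ into triangles whose vertex set is $\mathcal{P}$. For an interior edge $e$ of a triangulation $\mathcal{T}$, the quadrilateral associated with $e$ is the union of the two triangles of $\mathcal{T}$ sharing $e$. A flip $f$ with underlying edge $\epsilon(f)=e$ is admissible in $\mathcal{T}$ if $e\in\mathcal{T}$ and its associated quadrilateral is convex; performing it replaces $e$ by the other diagonal $\phi(f)$ of that quadrilateral. Two distinct edges share a triangle in $\mathcal{T}$ if they are edges of the same triangle of $\mathcal{T}$. A sequence $F=\langle f_1,\ldots,f_r\rangle$ is valid with respect to $\mathcal{T}$ if there are triangulations $\mathcal{T}_0=\mathcal{T},\mathcal{T}_1,\ldots,\mathcal{T}_r$ such that $f_i$ is admissible in $\mathcal{T}_{i-1}$ and performing it yields $\mathcal{T}_i$; then we write $\mathcal{T}\xrightarrow{F}\mathcal{T}_r$. Flips in a sequence are distinct objects even if they have the same underlying edge. For $1\le i<j\le r$, flip $f_j$ is adjacent to $f_i$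 (written $f_i\to f_j$) if (1) either $\phi(f_i)=\epsilon(f_j)$ or $\phi(f_i)$ and $\epsilon(f_j)$ share a triangle in $\mathcal{T}_{j-1}$, and (2) there is no $p$ with $i<p<j$ and $\epsilon(f_p)=\phi(f_i)$. $\mathcal{D}_F$ is the directed acyclic graph whose nodes are the flips of $F$ and whose arcs are the pairs $f_i\to f_j$; a component of it is a weakly connected component. The flip distance between two triangulations is the minimum length of a valid sequence transforming one into the other. An instance $(\mathcal{T}_{initial},\mathcal{T}_{final},k)$ of Flip Distance consists of two triangulations of $\mathcal{P}$ and $k\in\mathbb{N}$; a solution is a valid sequence $F$ of length $k$ with $\mathcal{T}_{initial}\xrightarrow{F}\mathcal{T}_{final}$, where $k$ is the flip distance between them. For a solution $F=\langle f_1,\ldots,f_k\rangle$, $\mathcal{T}_j$ denotes the outcome of applying $\langle f_1,\ldots,f_j\rangle$ to $\mathcal{T}_{initial}$. A changed edge is an edge of $\mathcal{T}_{initial}$ not in $\mathcal{T}_{final}$; a component of $\mathcal{D}_F$ is essential if it contains a flip whose underlying edge is a changed edge. A solution $F$ is normalized if every component of $\mathcal{D}_F$ is essential and the flips of each component of $\mathcal{D}_F$ appear as a consecutive block in $F$. *)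

(* Defs.v *)
From HB Require Import structures.
From mathcomp Require Import all_boot all_order all_algebra.
Set Implicit Arguments. Unset Strict Implicit. Unset Printing Implicit Defensive.
Import Order.TTheory GRing.Theory Num.Theory.
Local Open Scope ring_scope.

Section Geometry.
Variables (R : realFieldType) (n : nat) (p : 'I_n -> 'rV[R]_2).
(* The point set P is {p i | i < n} (p injective); points are referred to
   by their index, edges are 2-element index sets, triangles 3-element sets. *)

Definition in_hull (S : {set 'I_n}) (x : 'rV[R]_2) : Prop :=
  exists w : 'I_n -> R,
    [/\ forall i, i \notin S -> w i = 0,
        forall i, 0 <= w i,
        \sum_i w i = 1 &
        \sum_i w i *: p i = x].

Definition in_open (S : {set 'I_n}) (x : 'rV[R]_2) : Prop :=
  exists w : 'I_n -> R,
    [/\ forall i, i \notin S -> w i = 0,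
        forall i, i \in S -> 0 < w i,
        \sum_i w i = 1 &
        \sum_i w i *: p i = x].

Definition aff_indep (S : {set 'I_n}) : Prop :=
  forall w : 'I_n -> R, (forall i, i \notin S -> w i = 0) ->
    \sum_i w i = 0 -> \sum_i w i *: p i = 0 -> forall i, w i = 0.

(* T is a triangulation of P: a set of non-degenerate triangles with vertices
   in P, with pairwise disjoint interiors, whose union is conv(P), and such that
   no point of P lies on a triangle except at its vertices (so the vertex set
   is P and triangles meet face to face). *)
Definition triangulation (T : {set {set 'I_n}}) : Prop :=
  [/\ forall t, t \in T -> #|t| = 3 /\ aff_indep t,
      forall x, in_hull setT x <-> exists2 t, t \in T & in_hull t x,
      forall t1 t2 x, t1 \in T -> t2 \in T -> t1 != t2 ->
        in_open t1 x -> in_open t2 x -> False &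
      forall t i, t \in T -> in_hull t (p i) -> i \in t].

Definition conv_position (Q : {set 'I_n}) : Prop :=
  forall v, v \in Q -> ~ in_hull (Q :\ v) (p v).

End Geometry.

Section Flips.
Variable n : nat.
Implicit Types (T : {set {set 'I_n}}) (e : {set 'I_n}) (F : seq {set 'I_n}).

Definition is_edge T e : bool := (#|e| == 2) && [exists t in T, e \subset t].

Definition tris_of T e : {set {set 'I_n}} := [set t in T | e \subset t].

Definition quad T e : {set 'I_n} := \bigcup_(t in tris_of T e) t.

Definition flip_diag T e : {set 'I_n} := quad T e :\: e.

Definition do_flip T e : {set {set 'I_n}} :=
  (T :\: tris_of T e) :|: [set flip_diag T e :|: [set v] | v in e].

Definition tri_after T F (j : nat) : {set {set 'I_n}} := foldl do_flip T (take j F).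

(* underlying edge of the (j+1)-th flip (0-based index j) *)
Definition eps F (j : nat) : {set 'I_n} := nth set0 F j.

(* phi of the (j+1)-th flip *)
Definition phi_at T F (j : nat) : {set 'I_n} := flip_diag (tri_after T F j) (eps F j).

End Flips.

Section Admissible.
Variables (R : realFieldType) (n : nat) (p : 'I_n -> 'rV[R]_2).
Implicit Types (T : {set {set 'I_n}}) (e : {set 'I_n}) (F : seq {set 'I_n}).

Definition admissible T e : Prop :=
  [/\ is_edge T e, #|tris_of T e| = 2 & conv_position p (quad T e)].

Definition valid T F : Prop :=
  forall j, (j < size F)%N -> admissible (tri_after T F j) (eps F j).

Definition transforms T F T' : Prop := valid T F /\ tri_after T F (size F) = T'.

Definition is_solution Tinit Tfinal F : Prop :=
  [/\ triangulation p Tinit, triangulation p Tfinal,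
      transforms Tinit F Tfinal &
      forall G, transforms Tinit G Tfinal -> (size F <= size G)%N].

End Admissible.

Section DAG.
Local Unset Implicit Arguments.
Variable n : nat.
Implicit Types (T : {set {set 'I_n}}) (e : {set 'I_n}) (F : seq {set 'I_n}).

(* f_{i+1} -> f_{j+1} (0-based indices i < j) *)
Definition flip_adj T F (i j : nat) : bool :=
  [&& (i < j)%N, (j < size F)%N,
      (phi_at T F i == eps F j) ||
      [exists t in tri_after T F j,
         [&& phi_at T F i \subset t, eps F j \subset t & phi_at T F i != eps F j]] &
      all (fun q => eps F q != phi_at T F i) (iota i.+1 (j - i.+1))].

Definition DF T F : rel 'I_(size F) := fun a b => flip_adj T F a b.

Definition same_comp T F (a b : 'I_(size F)) : bool :=
  connect (fun x y : 'I_(size F) => DF T F x y || DF T F y x) a b.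

Definition changed_edge (Tinit Tfinal : {set {set 'I_n}}) e : bool :=
  is_edge Tinit e && ~~ is_edge Tfinal e.

End DAG.
Arguments flip_adj {n}.
Arguments DF {n}.
Arguments same_comp {n}.
Arguments changed_edge {n}.

Definition normalized (R : realFieldType) (n : nat) (p : 'I_n -> 'rV[R]_2)
  (Tinit Tfinal : {set {set 'I_n}}) (F : seq {set 'I_n}) : Prop :=
  [/\ is_solution p Tinit Tfinal F,
      forall a : 'I_(size F), exists2 b : 'I_(size F),
        same_comp Tinit F a b & changed_edge Tinit Tfinal (eps F b) &
      forall a b c : 'I_(size F), (a < b < c)%N -> same_comp Tinit F a c ->
        same_comp Tinit F a b].

(* Main.v *)
Require Import Defs.
From HB Require Import structures.
From mathcomp Require Import all_boot all_order all_algebra.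
From mathcomp Require Import ring lra zify.
Set Implicit Arguments. Unset Strict Implicit. Unset Printing Implicit Defensive.


Section Sets.
Variable n : nat.

Lemma card3 (t : {set 'I_n}) : #|t| = 3 ->
  exists a b c, [/\ a != b, a != c, b != c & t = [set a; b; c]].
Proof.
move=> h; have : 0 < #|t| by rewrite h.
case/card_gt0P => a at'.
have h2 : #|t :\ a| == 2.
  by move: (cardsD1 a t); rewrite at' h add1n => -[] <-.
case/cards2P: h2 => b [c [bc E]].
have bt : b \in t :\ a by rewrite E !inE eqxx.
have ct : c \in t :\ a by rewrite E !inE eqxx orbT.
move: bt ct; rewrite !inE => /andP [ba _] /andP [ca _].
exists a, b, c; split => //; try by rewrite eq_sym.
rewrite -(setD1K at') E; apply/setP => x; rewrite !inE.
by rewrite orbA.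
Qed.

Lemma card3_set (a b c : 'I_n) : a != b -> a != c -> b != c -> #|[set a; b; c]| = 3.
Proof.
move=> ab ac bc.
have -> : [set a; b; c] = a |: [set b; c] by apply/setP => x; rewrite !inE orbA.
by rewrite cardsU1 cards2 bc !inE negb_or ab ac.
Qed.

Lemma tri_form (e t : {set 'I_n}) u v : u != v -> e = [set u; v] -> #|t| = 3 -> e \subset t ->
  exists w, [/\ w != u, w != v & t = [set u; v; w]].
Proof.
move=> uv Ee ht sub.
have h1 : #|t :\: e| == 1.
  by rewrite cardsDS // ht Ee cards2 uv.
case/cards1P: h1 => w Ew.
have wt : w \in t :\: e by rewrite Ew inE.
move: wt; rewrite inE Ee !inE negb_or => /andP [/andP [wu wv] _].
exists w; split => //.
apply/setP => x; rewrite !inE.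
move/setP: (Ew) => /(_ x); rewrite !inE => <-.
case xe: (x \in e).
- rewrite (subsetP sub x xe); move: xe; rewrite Ee !inE => -> //.
- by move: xe; rewrite Ee !inE => ->.
Qed.

End Sets.

Import Order.TTheory GRing.Theory Num.Theory.
Local Open Scope ring_scope.

Section Geo.
Variables (R : realFieldType) (n : nat) (p : 'I_n -> 'rV[R]_2).

Definition cx (v : 'rV[R]_2) := v 0 ord0.
Definition cy (v : 'rV[R]_2) := v 0 ord_max.

Lemma rv2_eq (u v : 'rV[R]_2) : cx u = cx v -> cy u = cy v -> u = v.
Proof.
move=> hx hy; apply/rowP => j.
have [->|->] : j = ord0 \/ j = ord_max.
  case: j => [[|[|m]] Hm]; [left|right|]; try (apply: val_inj; done). by [].
- have -> : (0 : 'I_1) = ord0 by apply/val_inj. exact: hx.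
- have -> : (0 : 'I_1) = ord0 by apply/val_inj. exact: hy.
Qed.

Lemma cx_sum (w : 'I_n -> R) : cx (\sum_i w i *: p i) = \sum_i w i * cx (p i).
Proof. by rewrite /cx summxE; apply: eq_bigr => j _; rewrite !mxE. Qed.
Lemma cy_sum (w : 'I_n -> R) : cy (\sum_i w i *: p i) = \sum_i w i * cy (p i).
Proof. by rewrite /cy summxE; apply: eq_bigr => j _; rewrite !mxE. Qed.

Lemma sum3 (V : zmodType) (G : 'I_n -> V) a b c :
  a != b -> a != c -> b != c ->
  (forall i, i \notin [set a; b; c] -> G i = 0) ->
  \sum_i G i = G a + G b + G c.
Proof.
move=> ab ac bc H.
rewrite (bigD1 a) //= (bigD1 b) //= 1?eq_sym // (bigD1 c) /=; last by rewrite !(eq_sym c) ac bc.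
rewrite big1 ?addr0 ?addrA // => i /andP [/andP [ia ib] ic].
by apply: H; rewrite !inE (negbTE ia) (negbTE ib) (negbTE ic).
Qed.


Lemma hull3E a b c z : a != b -> a != c -> b != c ->
  in_hull p [set a; b; c] z <-> exists al be ga,
   [/\ 0 <= al, 0 <= be, 0 <= ga, al + be + ga = 1 &
       z = al *: p a + be *: p b + ga *: p c].
Proof.
move=> ab ac bc; split.
- case=> w [H0 Hnn Hs Hc]; exists (w a), (w b), (w c); split => //.
    by rewrite -Hs (sum3 ab ac bc).
  rewrite -Hc (sum3 (G := fun i => w i *: p i) ab ac bc) // => i /H0 ->.
  by rewrite scale0r.
- case=> al [be [ga [H1 H2 H3 Hs Hz]]].
  exists (fun i => if i == a then al else if i == b then be else if i == c then ga else 0).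
  have ba : (b == a) = false by apply/negbTE; rewrite eq_sym.
  have ca : (c == a) = false by apply/negbTE; rewrite eq_sym.
  have cb : (c == b) = false by apply/negbTE; rewrite eq_sym.
  split.
  + move=> i; rewrite !inE; case: (i == a) => //; case: (i == b) => //;
      by case: (i == c).
  + by move=> i; repeat case: ifP => _.
  + rewrite (sum3 ab ac bc) /=; last first.
      move=> i; rewrite !inE; case: (i == a) => //; case: (i == b) => //;
      by case: (i == c).
    by rewrite /= ba ca cb !eqxx.
  + rewrite (sum3 (G := fun i => _ *: p i) ab ac bc) /=; last first.
      move=> i; rewrite !inE; case: (i == a) => //; case: (i == b) => //;
      by case: (i == c) => // _; rewrite scale0r.
    by rewrite /= ba ca cb !eqxx.
Qed.

Lemma open3E a b c z : a != b -> a != c -> b != c ->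
  in_open p [set a; b; c] z <-> exists al be ga,
   [/\ 0 < al, 0 < be, 0 < ga, al + be + ga = 1 &
       z = al *: p a + be *: p b + ga *: p c].
Proof.
move=> ab ac bc; split.
- case=> w [H0 Hnn Hs Hc]; exists (w a), (w b), (w c); split.
  + by apply: Hnn; rewrite !inE eqxx.
  + by apply: Hnn; rewrite !inE eqxx ?orbT.
  + by apply: Hnn; rewrite !inE eqxx ?orbT.
  + by rewrite -Hs (sum3 ab ac bc).
  rewrite -Hc (sum3 (G := fun i => w i *: p i) ab ac bc) // => i /H0 ->.
  by rewrite scale0r.
- case=> al [be [ga [H1 H2 H3 Hs Hz]]].
  exists (fun i => if i == a then al else if i == b then be else if i == c then ga else 0).
  have ba : (b == a) = false by apply/negbTE; rewrite eq_sym.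
  have ca : (c == a) = false by apply/negbTE; rewrite eq_sym.
  have cb : (c == b) = false by apply/negbTE; rewrite eq_sym.
  split.
  + move=> i; rewrite !inE; case: (i == a) => //; case: (i == b) => //;
      by case: (i == c).
  + move=> i; rewrite !inE; by repeat case: ifP => _.
  + rewrite (sum3 ab ac bc) /=; last first.
      move=> i; rewrite !inE; case: (i == a) => //; case: (i == b) => //;
      by case: (i == c).
    by rewrite /= ba ca cb !eqxx.
  + rewrite (sum3 (G := fun i => _ *: p i) ab ac bc) /=; last first.
      move=> i; rewrite !inE; case: (i == a) => //; case: (i == b) => //;
      by case: (i == c) => // _; rewrite scale0r.
    by rewrite /= ba ca cb !eqxx.
Qed.


Definition Dv (u v w : 'rV[R]_2) :=
  (cx v - cx u) * (cy w - cy u) - (cy v - cy u) * (cx w - cx u).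

Lemma cxD (u v : 'rV[R]_2) : cx (u + v) = cx u + cx v. Proof. by rewrite /cx mxE. Qed.
Lemma cyD (u v : 'rV[R]_2) : cy (u + v) = cy u + cy v. Proof. by rewrite /cy mxE. Qed.
Lemma cxZ k (u : 'rV[R]_2) : cx (k *: u) = k * cx u. Proof. by rewrite /cx mxE. Qed.
Lemma cyZ k (u : 'rV[R]_2) : cy (k *: u) = k * cy u. Proof. by rewrite /cy mxE. Qed.

Lemma weights_D (A B C Z : 'rV[R]_2) al be ga : al + be + ga = 1 ->
  Z = al *: A + be *: B + ga *: C ->
  [/\ Dv Z B C = al * Dv A B C, Dv A Z C = be * Dv A B C & Dv A B Z = ga * Dv A B C].
Proof.
move=> Hs ->; have -> : al = 1 - be - ga by rewrite -Hs; ring.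
by rewrite /Dv !(cxD, cxZ, cyD, cyZ); split; ring.
Qed.

Lemma D_weights (A B C Z : 'rV[R]_2) : Dv A B C != 0 ->
  Dv Z B C / Dv A B C + Dv A Z C / Dv A B C + Dv A B Z / Dv A B C = 1 /\
  Z = (Dv Z B C / Dv A B C) *: A + (Dv A Z C / Dv A B C) *: B + (Dv A B Z / Dv A B C) *: C.
Proof.
move=> D0; move: (D0); rewrite /Dv => D0'; split.
  field; exact: D0'.
by apply: rv2_eq; rewrite !(cxD, cxZ, cyD, cyZ); field; exact: D0'.
Qed.

Lemma sqr_pos (x : R) : x != 0 -> 0 < x * x.
Proof. by move=> x0; rewrite -expr2 lt0r sqr_ge0 sqrf_eq0 x0. Qed.

Lemma div_ge0' (x d : R) : d != 0 -> 0 <= x * d -> 0 <= x / d.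
Proof.
move=> d0 h; have -> : x / d = (x * d) / (d * d) by field.
by rewrite divr_ge0 // ltW // sqr_pos.
Qed.
Lemma div_gt0' (x d : R) : d != 0 -> 0 < x * d -> 0 < x / d.
Proof.
move=> d0 h; have -> : x / d = (x * d) / (d * d) by field.
by rewrite divr_gt0 // sqr_pos.
Qed.

Definition hullS (A B C Z : 'rV[R]_2) :=
  [/\ 0 <= Dv Z B C * Dv A B C, 0 <= Dv A Z C * Dv A B C & 0 <= Dv A B Z * Dv A B C].
Definition openS (A B C Z : 'rV[R]_2) :=
  [/\ 0 < Dv Z B C * Dv A B C, 0 < Dv A Z C * Dv A B C & 0 < Dv A B Z * Dv A B C].

Lemma hull3S a b c z : a != b -> a != c -> b != c -> Dv (p a) (p b) (p c) != 0 ->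
  in_hull p [set a; b; c] z <-> hullS (p a) (p b) (p c) z.
Proof.
move=> ab ac bc D0; rewrite hull3E // /hullS /openS; split.
- case=> al [be [ga [H1 H2 H3 Hs Hz]]]; case: (weights_D Hs Hz) => -> -> ->.
  by split; rewrite -mulrA mulr_ge0 // ltW // sqr_pos.
- case=> H1 H2 H3; case: (D_weights z D0) => Hs Hz.
  by exists (Dv z (p b) (p c) / Dv (p a) (p b) (p c)),
    (Dv (p a) z (p c) / Dv (p a) (p b) (p c)),
    (Dv (p a) (p b) z / Dv (p a) (p b) (p c)); split => //; apply: div_ge0'.
Qed.

Lemma open3S a b c z : a != b -> a != c -> b != c -> Dv (p a) (p b) (p c) != 0 ->
  in_open p [set a; b; c] z <-> openS (p a) (p b) (p c) z.
Proof.
move=> ab ac bc D0; rewrite open3E // /hullS /openS; split.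
- case=> al [be [ga [H1 H2 H3 Hs Hz]]]; case: (weights_D Hs Hz) => -> -> ->.
  by split; rewrite -mulrA mulr_gt0 // sqr_pos.
- case=> H1 H2 H3; case: (D_weights z D0) => Hs Hz.
  by exists (Dv z (p b) (p c) / Dv (p a) (p b) (p c)),
    (Dv (p a) z (p c) / Dv (p a) (p b) (p c)),
    (Dv (p a) (p b) z / Dv (p a) (p b) (p c)); split => //; apply: div_gt0'.
Qed.


Lemma collin_rel (A B C : 'rV[R]_2) : Dv A B C = 0 ->
  exists al be, [/\ al != 0 \/ be != 0,
     al * (cx B - cx A) + be * (cx C - cx A) = 0 &
     al * (cy B - cy A) + be * (cy C - cy A) = 0].
Proof.
rewrite /Dv => D0.
have [Cx0|Cx0] := eqVneq (cx C - cx A) 0.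
  have [Bx0|Bx0] := eqVneq (cx B - cx A) 0.
    have [Cy0|Cy0] := eqVneq (cy C - cy A) 0.
      exists 0, 1; split; first by right; exact: oner_neq0.
        by rewrite Cx0; ring.
      by rewrite Cy0; ring.
    exists (cy C - cy A), (- (cy B - cy A)); split; first by left.
      by rewrite Bx0 Cx0; ring.
    ring.
  exists (cx C - cx A), (- (cx B - cx A)); split; first by right; rewrite oppr_eq0.
    ring.
  by rewrite Cx0; move: D0; rewrite Cx0; lra.
exists (cx C - cx A), (- (cx B - cx A)); split; first by left.
  ring.
by move: D0 => /eqP; rewrite subr_eq0 => /eqP D0; rewrite mulNr mulrC -D0; ring.
Qed.

Lemma aff_indep_D a b c : a != b -> a != c -> b != c ->
  aff_indep p [set a; b; c] -> Dv (p a) (p b) (p c) != 0.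
Proof.
move=> ab ac bc HI; apply/eqP => /collin_rel [al [be [Hnz Hx Hy]]].
have ba : (b == a) = false by apply/negbTE; rewrite eq_sym.
have ca : (c == a) = false by apply/negbTE; rewrite eq_sym.
have cb : (c == b) = false by apply/negbTE; rewrite eq_sym.
pose w := fun i => if i == a then - (al + be) else if i == b then al else if i == c then be else 0.
have Hsup : forall i, i \notin [set a; b; c] -> w i = 0.
  by move=> i; rewrite !inE /w; repeat case: ifP => _.
have H1 := HI w Hsup.
have Hs : \sum_i w i = 0.
  by rewrite (sum3 ab ac bc) // /w /= ba ca cb !eqxx; ring.
have Hc : \sum_i w i *: p i = 0.
  rewrite (sum3 (G := fun i => w i *: p i) ab ac bc); last by move=> i /Hsup ->; rewrite scale0r.
  apply: rv2_eq; rewrite /w /= ba ca cb !eqxx !(cxD, cxZ, cyD, cyZ) /cx /cy !mxE.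
    by move: Hx; rewrite /cx; lra.
  by move: Hy; rewrite /cy; lra.
have := H1 Hs Hc; case: Hnz => /eqP Hnz.
  by move/(_ b); rewrite /w ba eqxx.
by move/(_ c); rewrite /w ca cb eqxx.
Qed.

Lemma D_aff_indep a b c : a != b -> a != c -> b != c ->
  Dv (p a) (p b) (p c) != 0 -> aff_indep p [set a; b; c].
Proof.
move=> ab ac bc D0 w Hsup Hs Hc.
have Hs' := Hs; rewrite (sum3 ab ac bc Hsup) in Hs'.
have Hc' := Hc; rewrite (sum3 (G := fun i => w i *: p i) ab ac bc) in Hc'; last first.
  by move=> i /Hsup ->; rewrite scale0r.
have Ex : w a * cx (p a) + w b * cx (p b) + w c * cx (p c) = 0.
  by move: (congr1 cx Hc'); rewrite !(cxD, cxZ) /cx mxE.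
have Ey : w a * cy (p a) + w b * cy (p b) + w c * cy (p c) = 0.
  by move: (congr1 cy Hc'); rewrite !(cyD, cyZ) /cy mxE.
have Wb : w b * Dv (p a) (p b) (p c) = 0.
  have -> : w b * Dv (p a) (p b) (p c) =
    (cy (p c) - cy (p a)) * ((w a * cx (p a) + w b * cx (p b) + w c * cx (p c)) - (w a + w b + w c) * cx (p a))
    - (cx (p c) - cx (p a)) * ((w a * cy (p a) + w b * cy (p b) + w c * cy (p c)) - (w a + w b + w c) * cy (p a)).
    by rewrite /Dv; ring.
  by rewrite Ex Ey Hs'; ring.
have Wc : w c * Dv (p a) (p b) (p c) = 0.
  have -> : w c * Dv (p a) (p b) (p c) =
    - (cy (p b) - cy (p a)) * ((w a * cx (p a) + w b * cx (p b) + w c * cx (p c)) - (w a + w b + w c) * cx (p a))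
    + (cx (p b) - cx (p a)) * ((w a * cy (p a) + w b * cy (p b) + w c * cy (p c)) - (w a + w b + w c) * cy (p a)).
    by rewrite /Dv; ring.
  by rewrite Ex Ey Hs'; ring.
move/eqP: Wb; rewrite mulf_eq0 (negbTE D0) orbF => /eqP Wb.
move/eqP: Wc; rewrite mulf_eq0 (negbTE D0) orbF => /eqP Wc.
have Wa : w a = 0 by move: Hs'; rewrite Wb Wc !addr0.
move=> i; have [->|ia] := eqVneq i a => //; have [->|ib] := eqVneq i b => //;
have [->|ic] := eqVneq i c => //.
by apply: Hsup; rewrite !inE (negbTE ia) (negbTE ib) (negbTE ic).
Qed.


Lemma eps1 (c d : R) : 0 < c ->
  exists2 e0, 0 < e0 & forall s, 0 < s -> s <= e0 -> 0 < (1 - s) * c + s * d.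
Proof.
move=> c0; have hn : 0 <= `|d| := normr_ge0 d.
have hp : 0 < c + `|d| by lra.
exists (c / (2 * (c + `|d|))); first by rewrite divr_gt0 // mulr_gt0 //; lra.
move=> s s0 se.
have h1 : s * (c + `|d|) <= c / 2.
  have -> : c / 2 = (c / (2 * (c + `|d|))) * (c + `|d|).
    by field; exact: lt0r_neq0.
  by rewrite ler_pM2r.
have h2 : s * (- `|d|) <= s * d.
  by apply: ler_wpM2l; [lra | apply: lerNnormlW].
move: h1 h2; rewrite mulrDr mulrN mulrBl mul1r; lra.
Qed.

Lemma eps_and (P Q : R -> Prop) :
  (exists2 e0, 0 < e0 & forall s, 0 < s -> s <= e0 -> P s) ->
  (exists2 e0, 0 < e0 & forall s, 0 < s -> s <= e0 -> Q s) ->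
  exists2 e0, 0 < e0 & forall s, 0 < s -> s <= e0 -> P s /\ Q s.
Proof.
case=> e1 e10 H1 [e2 e20 H2]; exists (Num.min e1 e2); first by rewrite lt_min e10.
move=> s s0; rewrite le_min => /andP [h1 h2]; split; [exact: H1 | exact: H2].
Qed.

Lemma eps_half : exists2 e0, 0 < e0 & forall s : R, 0 < s -> s <= e0 -> s <= 1/2.
Proof. by exists (1/2) => //; lra. Qed.

Lemma comb_pos (c d s : R) : 0 <= c -> 0 < d -> 0 < s -> s <= 1/2 -> 0 < (1 - s) * c + s * d.
Proof.
move=> c0 d0 s0 s1; have h1 : 0 <= (1 - s) * c by apply: mulr_ge0 => //; lra.
have h2 : 0 < s * d by apply: mulr_gt0.
lra.
Qed.

Definition mix (s : R) (z g : 'rV[R]_2) := (1 - s) *: z + s *: g.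

Lemma Dmix1 s z g B C : Dv (mix s z g) B C = (1 - s) * Dv z B C + s * Dv g B C.
Proof. by rewrite /Dv /mix !(cxD, cxZ, cyD, cyZ); ring. Qed.
Lemma Dmix2 s z g A C : Dv A (mix s z g) C = (1 - s) * Dv A z C + s * Dv A g C.
Proof. by rewrite /Dv /mix !(cxD, cxZ, cyD, cyZ); ring. Qed.
Lemma Dmix3 s z g A B : Dv A B (mix s z g) = (1 - s) * Dv A B z + s * Dv A B g.
Proof. by rewrite /Dv /mix !(cxD, cxZ, cyD, cyZ); ring. Qed.

Lemma mixM (s : R) (x y k : R) : ((1 - s) * x + s * y) * k = (1 - s) * (x * k) + s * (y * k).
Proof. ring. Qed.

Definition cen (A B C : 'rV[R]_2) := (1/3 : R) *: (A + B + C).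

Lemma Dcen A B C : [/\ Dv (cen A B C) B C = Dv A B C / 3,
  Dv A (cen A B C) C = Dv A B C / 3 & Dv A B (cen A B C) = Dv A B C / 3].
Proof. by rewrite /Dv /cen !(cxD, cxZ, cyD, cyZ); split; field. Qed.

Lemma perturb A1 B1 C1 A2 B2 C2 z : Dv A1 B1 C1 != 0 ->
  hullS A1 B1 C1 z -> openS A2 B2 C2 z ->
  exists z', openS A1 B1 C1 z' /\ openS A2 B2 C2 z'.
Proof.
move=> D0 [h1 h2 h3] [o1 o2 o3].
set g := cen A1 B1 C1.
have Dg : 0 < Dv A1 B1 C1 / 3 * Dv A1 B1 C1.
  by rewrite mulrAC divr_gt0 // sqr_pos.
case: (Dcen A1 B1 C1) => g1 g2 g3.
have [e0 e00 He] := eps_and eps_half (eps_and (eps1 (Dv g B2 C2 * Dv A2 B2 C2) o1)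
  (eps_and (eps1 (Dv A2 g C2 * Dv A2 B2 C2) o2) (eps1 (Dv A2 B2 g * Dv A2 B2 C2) o3))).
have [s0 [hs [k1 [k2 [k3 k4]]]]] : exists s, 0 < s /\ (s <= 1/2 /\
    (0 < (1 - s) * (Dv z B2 C2 * Dv A2 B2 C2) + s * (Dv g B2 C2 * Dv A2 B2 C2) /\
     (0 < (1 - s) * (Dv A2 z C2 * Dv A2 B2 C2) + s * (Dv A2 g C2 * Dv A2 B2 C2) /\
      0 < (1 - s) * (Dv A2 B2 z * Dv A2 B2 C2) + s * (Dv A2 B2 g * Dv A2 B2 C2)))).
  by exists e0; split => //; apply: He.
exists (mix s0 z g); split; split; rewrite ?Dmix1 ?Dmix2 ?Dmix3 mixM //.
- by apply: comb_pos => //; rewrite /g g1.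
- by apply: comb_pos => //; rewrite /g g2.
- by apply: comb_pos => //; rewrite /g g3.
Qed.


Definition mid (A B : 'rV[R]_2) := (1/2 : R) *: (A + B).

Lemma Dmid A B X : [/\ Dv (mid A B) B X = Dv A B X / 2,
  Dv A (mid A B) X = Dv A B X / 2 & Dv A B (mid A B) = 0].
Proof. by rewrite /Dv /mid !(cxD, cxZ, cyD, cyZ); split; field. Qed.

Lemma sameside A B C E : Dv A B C != 0 -> Dv A B E != 0 ->
  0 < Dv A B C * Dv A B E -> exists z, openS A B C z /\ openS A B E z.
Proof.
move=> D0 E0 DE.
set m := mid A B; set g := cen A B C.
case: (Dcen A B C) => g1 g2 g3; case: (Dmid A B C) => m1 m2 m3.
case: (Dmid A B E) => m1' m2' m3'.
have Dg : 0 < Dv A B C / 3 * Dv A B C by rewrite mulrAC divr_gt0 // sqr_pos.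
have Dg2 : 0 < Dv A B C / 2 * Dv A B C by rewrite mulrAC divr_gt0 // sqr_pos.
have Eg2 : 0 < Dv A B E / 2 * Dv A B E by rewrite mulrAC divr_gt0 // sqr_pos.
have DEg : 0 < Dv A B C / 3 * Dv A B E by rewrite mulrAC divr_gt0.
have [e0 e00 He] := eps_and eps_half (eps_and
  (eps1 (Dv g B E * Dv A B E) Eg2) (eps1 (Dv A g E * Dv A B E) Eg2)).
have [s0 [hs [k1 [k2 k3]]]] : exists s, 0 < s /\ (s <= 1/2 /\
    (0 < (1 - s) * (Dv A B E / 2 * Dv A B E) + s * (Dv g B E * Dv A B E) /\
     0 < (1 - s) * (Dv A B E / 2 * Dv A B E) + s * (Dv A g E * Dv A B E))).
  by exists e0; split => //; apply: He.
exists (mix s0 m g); split; split; rewrite ?Dmix1 ?Dmix2 ?Dmix3 mixM.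
- by rewrite /m /g m1 g1; apply: comb_pos => //; apply: ltW.
- by rewrite /m /g m2 g2; apply: comb_pos => //; apply: ltW.
- by rewrite /m /g m3 g3 mul0r; apply: comb_pos.
- by rewrite /m m1'.
- by rewrite /m m2'.
- by rewrite /m /g m3' g3 mul0r; apply: comb_pos.
Qed.


Lemma poscomb a b c (Z : 'rV[R]_2) al be ga : a != b -> a != c -> b != c ->
  0 <= al -> 0 <= be -> 0 <= ga -> 0 < al + be + ga ->
  (al + be + ga) *: Z = al *: p a + be *: p b + ga *: p c ->
  in_hull p [set a; b; c] Z.
Proof.
move=> ab ac bc h1 h2 h3 hs hz; apply/hull3E => //.
have S0 : al + be + ga != 0 by apply: lt0r_neq0.
exists (al / (al + be + ga)), (be / (al + be + ga)), (ga / (al + be + ga)); split.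
- by apply: divr_ge0 => //; apply: ltW.
- by apply: divr_ge0 => //; apply: ltW.
- by apply: divr_ge0 => //; apply: ltW.
- by field.
apply: rv2_eq.
  move: (congr1 cx hz); rewrite !(cxD, cxZ) => e.
  apply: (mulfI S0); rewrite e; field; exact S0.
move: (congr1 cy hz); rewrite !(cyD, cyZ) => e.
apply: (mulfI S0); rewrite e; field; exact S0.
Qed.

Lemma conv_sides u v w1 w2 : u != v -> u != w1 -> u != w2 -> v != w1 -> v != w2 -> w1 != w2 ->
  Dv (p u) (p v) (p w1) * Dv (p u) (p v) (p w2) < 0 ->
  ~ in_hull p [set v; w1; w2] (p u) -> ~ in_hull p [set u; w1; w2] (p v) ->
  Dv (p w1) (p w2) (p u) * Dv (p w1) (p w2) (p v) < 0.
Proof.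
move=> uv uw1 uw2 vw1 vw2 w12 Hd Hu Hv; move: Hd.
set d1 := Dv (p u) (p v) (p w1); set d2 := Dv (p u) (p v) (p w2).
set eu := Dv (p w1) (p w2) (p u); set ev := Dv (p w1) (p w2) (p v).
move=> Hd.
have Eev : ev = eu + d1 - d2 by rewrite /ev /eu /d1 /d2 /Dv; ring.
have IdU : forall k, 0 <= eu * k -> 0 <= - d2 * k -> 0 <= d1 * k -> 0 < ev * k -> False.
  move=> k h1 h2 h3 h4; apply: Hu.
  have S : eu * k + - d2 * k + d1 * k = ev * k by rewrite Eev; ring.
  apply: (poscomb vw1 vw2 w12 h1 h2 h3); rewrite S //.
  by apply: rv2_eq; rewrite !(cxD, cxZ, cyD, cyZ) /ev /eu /d1 /d2 /Dv; ring.
have IdV : forall k, 0 <= ev * k -> 0 <= d2 * k -> 0 <= - d1 * k -> 0 < eu * k -> False.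
  move=> k h1 h2 h3 h4; apply: Hv.
  have S : ev * k + d2 * k + - d1 * k = eu * k by rewrite Eev; ring.
  apply: (poscomb uw1 uw2 w12 h1 h2 h3); rewrite S //.
  by apply: rv2_eq; rewrite !(cxD, cxZ, cyD, cyZ) /ev /eu /d1 /d2 /Dv; ring.
have [d1p|d1n] := ltP 0 d1.
- have d2n : d2 < 0 by rewrite -(pmulr_rlt0 _ d1p).
  have eun : eu < 0.
    rewrite ltNge; apply/negP => h; apply: (IdU 1); rewrite ?mulr1 //; lra.
  have evp : 0 < ev.
    rewrite ltNge; apply/negP => h; apply: (IdV (-1)); rewrite ?mulrN1; lra.
  by rewrite (nmulr_rlt0 _ eun).
- have d1n' : d1 < 0.
    by rewrite lt_neqAle d1n andbT; apply/eqP => E; move: Hd; rewrite E mul0r ltxx.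
  move: d1n' => {}d1n.
  have d2p : 0 < d2 by rewrite -(nmulr_rlt0 _ d1n).
  have eup : 0 < eu.
    rewrite ltNge; apply/negP => h; apply: (IdU (-1)); rewrite ?mulrN1; lra.
  have evn : ev < 0.
    rewrite ltNge; apply/negP => h; apply: (IdV 1); rewrite ?mulr1 //; lra.
  by rewrite (pmulr_rlt0 _ eup).
Qed.


Lemma Dlin1 (U V W z B C : 'rV[R]_2) al be ga : al + be + ga = 1 ->
  z = al *: U + be *: V + ga *: W ->
  Dv z B C = al * Dv U B C + be * Dv V B C + ga * Dv W B C.
Proof.
move=> Hs ->; have -> : al = 1 - be - ga by rewrite -Hs; ring.
by rewrite /Dv !(cxD, cxZ, cyD, cyZ); ring.
Qed.
Lemma Dlin2 (U V W z A C : 'rV[R]_2) al be ga : al + be + ga = 1 ->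
  z = al *: U + be *: V + ga *: W ->
  Dv A z C = al * Dv A U C + be * Dv A V C + ga * Dv A W C.
Proof.
move=> Hs ->; have -> : al = 1 - be - ga by rewrite -Hs; ring.
by rewrite /Dv !(cxD, cxZ, cyD, cyZ); ring.
Qed.
Lemma Dlin3 (U V W z A B : 'rV[R]_2) al be ga : al + be + ga = 1 ->
  z = al *: U + be *: V + ga *: W ->
  Dv A B z = al * Dv A B U + be * Dv A B V + ga * Dv A B W.
Proof.
move=> Hs ->; have -> : al = 1 - be - ga by rewrite -Hs; ring.
by rewrite /Dv !(cxD, cxZ, cyD, cyZ); ring.
Qed.

Ltac sgn := first [ assumption | (apply: ltW; assumption)
 | (apply: mulr_ge0; sgn) | (apply: mulr_le0; sgn)
 | (apply: mulr_ge0_le0; sgn) | (apply: mulr_le0_ge0; sgn)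
 | (apply: addr_ge0; sgn)
 | (rewrite oppr_ge0; sgn) | (rewrite oppr_le0; sgn)
 | (rewrite mulrDl; sgn) ].

Lemma cover4 (U V W1 W2 z : 'rV[R]_2) :
  Dv U V W1 * Dv U V W2 < 0 -> Dv W1 W2 U * Dv W1 W2 V < 0 ->
  hullS U V W1 z -> hullS W1 W2 U z \/ hullS W1 W2 V z.
Proof.
move=> H1 H2 [h1 h2 h3].
have D0 : Dv U V W1 != 0 by apply/eqP => E; move: H1; rewrite E mul0r ltxx.
case: (D_weights z D0) => Hs Hz.
have a0 := div_ge0' D0 h1; have b0 := div_ge0' D0 h2; have c0 := div_ge0' D0 h3.
move: Hs Hz a0 b0 c0.
set al := Dv z V W1 / _; set be := Dv U z W1 / _; set ga := Dv U V z / _.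
move=> Hs Hz a0 b0 c0.
have L1 : Dv W1 W2 z = al * Dv W1 W2 U + be * Dv W1 W2 V.
  by rewrite (Dlin3 _ _ Hs Hz); rewrite /Dv; ring.
have L2 : Dv z W2 U = be * Dv U V W2 + ga * Dv W1 W2 U.
  by rewrite (Dlin1 _ _ Hs Hz); rewrite /Dv; ring.
have L3 : Dv W1 z U = - be * Dv U V W1.
  by rewrite (Dlin2 _ _ Hs Hz); rewrite /Dv; ring.
have L4 : Dv z W2 V = - al * Dv U V W2 + ga * Dv W1 W2 V.
  by rewrite (Dlin1 _ _ Hs Hz); rewrite /Dv; ring.
have L5 : Dv W1 z V = al * Dv U V W1.
  by rewrite (Dlin2 _ _ Hs Hz); rewrite /Dv; ring.
have E : Dv W1 W2 V - Dv W1 W2 U = Dv U V W1 - Dv U V W2 by rewrite /Dv; ring.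
rewrite /hullS L1 L2 L3 L4 L5.
move: H1 H2 E; set d1 := Dv U V W1; set d2 := Dv U V W2;
  set eu := Dv W1 W2 U; set ev := Dv W1 W2 V => H1 H2 E.
have [d1p|d1n] := ltP 0 d1.
- have d2n : d2 < 0 by rewrite -(pmulr_rlt0 _ d1p).
  have eun : eu < 0.
    rewrite ltNge; apply/negP => h.
    have evp : 0 < ev by lra.
    by move: H2; rewrite ltNge mulr_ge0 // ltW.
  have evp : 0 < ev by rewrite -(nmulr_rlt0 _ eun).
  have [hX|hX] := leP (al * eu + be * ev) 0.
  + by left; split; sgn.
  + by right; split; sgn.
- have d1n' : d1 < 0.
    by rewrite lt_neqAle d1n andbT; apply/eqP => E'; move: H1; rewrite E' mul0r ltxx.
  move: d1n' => {}d1n.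
  have d2p : 0 < d2 by rewrite -(nmulr_rlt0 _ d1n).
  have eup : 0 < eu.
    rewrite ltNge; apply/negP => h.
    have evn : ev < 0 by lra.
    by move: H2; rewrite ltNge mulr_le0 // ltW.
  have evn : ev < 0 by rewrite -(pmulr_rlt0 _ eup).
  have [hX|hX] := leP (al * eu + be * ev) 0.
  + by right; split; sgn.
  + by left; split; sgn.
Qed.

End Geo.


Section Flip.
Variables (R : realFieldType) (n : nat) (p : 'I_n -> 'rV[R]_2).

Definition good (T : {set {set 'I_n}}) :=
  (forall t, t \in T -> #|t| = 3 /\ aff_indep p t) /\
  (forall t1 t2 x, t1 \in T -> t2 \in T -> t1 != t2 ->
     in_open p t1 x -> in_open p t2 x -> False).

Record FD (T : {set {set 'I_n}}) e u v w1 w2 : Prop := {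
  fd_uv : u != v; fd_uw1 : u != w1; fd_uw2 : u != w2;
  fd_vw1 : v != w1; fd_vw2 : v != w2; fd_w12 : w1 != w2;
  fd_e : e = [set u; v];
  fd_t1 : [set u; v; w1] \in T;
  fd_t2 : [set u; v; w2] \in T;
  fd_tris : forall t, t \in T -> e \subset t -> t = [set u; v; w1] \/ t = [set u; v; w2];
  fd_diag : flip_diag T e = [set w1; w2];
  fd_flip : forall t, (t \in do_flip T e) =
     [|| (t \in T) && ~~ (e \subset t), t == [set w1; w2; u] | t == [set w1; w2; v]];
  fd_d : Dv (p u) (p v) (p w1) * Dv (p u) (p v) (p w2) < 0;
  fd_ee : Dv (p w1) (p w2) (p u) * Dv (p w1) (p w2) (p v) < 0 }.

Lemma FS T e : good T -> admissible p T e -> exists u v w1 w2, FD T e u v w1 w2.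
Proof.
move=> [G1 G2] [/andP [he _] htr hconv].
case/cards2P: he => u [v [uv Ee]].
move/eqP: htr; case/cards2P => t1 [t2 [t12 Etr]].
have t1i : t1 \in tris_of T e by rewrite Etr !inE eqxx.
have t2i : t2 \in tris_of T e by rewrite Etr !inE eqxx orbT.
move: t1i t2i; rewrite !inE => /andP [t1T s1] /andP [t2T s2].
have [c1 _] := G1 _ t1T; have [c2 _] := G1 _ t2T.
have [w1 [w1u w1v E1]] := tri_form uv Ee c1 s1.
have [w2 [w2u w2v E2]] := tri_form uv Ee c2 s2.
have w12 : w1 != w2 by apply: contra t12 => /eqP E; rewrite E1 E2 E.
have uw1 : u != w1 by rewrite eq_sym. have uw2 : u != w2 by rewrite eq_sym.
have vw1 : v != w1 by rewrite eq_sym. have vw2 : v != w2 by rewrite eq_sym.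
have tris : forall t, t \in T -> e \subset t -> t = [set u; v; w1] \/ t = [set u; v; w2].
  move=> t tT st; have : t \in tris_of T e by rewrite inE tT st.
  by rewrite Etr !inE => /orP [/eqP ->|/eqP ->]; [left|right].
have quadE : forall x, (x \in quad T e) = [|| x == u, x == v, x == w1 | x == w2].
  move=> x; apply/bigcupP/idP.
  - case=> t; rewrite Etr !inE => /orP [/eqP ->|/eqP ->]; rewrite ?E1 ?E2 !inE;
      by rewrite -!orbA => /or3P [->|->|->]; rewrite ?orbT.
  - case/or4P => H.
    + by exists t1; [rewrite Etr !inE eqxx | rewrite E1 !inE H].
    + by exists t1; [rewrite Etr !inE eqxx | rewrite E1 !inE H orbT].
    + by exists t1; [rewrite Etr !inE eqxx | rewrite E1 !inE H orbT].
    + by exists t2; [rewrite Etr !inE eqxx orbT | rewrite E2 !inE H orbT].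
have diag : flip_diag T e = [set w1; w2].
  apply/setP => x; rewrite /flip_diag !inE quadE Ee !inE.
  have [->|xu] := eqVneq x u; first by rewrite (negbTE uw1) (negbTE uw2).
  have [->|xv] := eqVneq x v; first by rewrite (negbTE vw1) (negbTE vw2).
  by [].
have D1 : Dv (p u) (p v) (p w1) != 0.
  by apply: aff_indep_D => //; have [_ ] := G1 _ t1T; rewrite E1.
have D2 : Dv (p u) (p v) (p w2) != 0.
  by apply: aff_indep_D => //; have [_ ] := G1 _ t2T; rewrite E2.
have dd : Dv (p u) (p v) (p w1) * Dv (p u) (p v) (p w2) < 0.
  rewrite ltNge; apply/negP => H.
  have H' : 0 < Dv (p u) (p v) (p w1) * Dv (p u) (p v) (p w2).
    by rewrite lt_neqAle H andbT eq_sym mulf_neq0.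
  have [z [z1 z2]] := sameside D1 D2 H'.
  apply: (G2 t1 t2 z) => //.
    by rewrite E1 open3S.
  by rewrite E2 open3S.
have cu : ~ in_hull p [set v; w1; w2] (p u).
  have : u \in quad T e by rewrite quadE eqxx.
  move/hconv; congr (~ in_hull p _ _); apply/setP => x; rewrite !inE quadE.
  have [->|xu] := eqVneq x u; first by rewrite (negbTE uv) (negbTE uw1) (negbTE uw2).
  by rewrite /= orbA.
have cv : ~ in_hull p [set u; w1; w2] (p v).
  have : v \in quad T e by rewrite quadE eqxx orbT.
  move/hconv; congr (~ in_hull p _ _); apply/setP => x; rewrite !inE quadE.
  have vu : v != u by rewrite eq_sym.
  have [->|xv] := eqVneq x v; first by rewrite (negbTE vu) (negbTE vw1) (negbTE vw2).
  by rewrite /= orbA.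
have ee := conv_sides uv uw1 uw2 vw1 vw2 w12 dd cu cv.
exists u, v, w1, w2; split => //.
- by rewrite -E1.
- by rewrite -E2.
- move=> t; rewrite /do_flip !inE diag.
  congr (_ || _).
    by case: (t \in T); case: (e \subset t).
  apply/imsetP/idP.
    by case=> x; rewrite Ee !inE => /orP [/eqP ->|/eqP ->] ->; rewrite eqxx ?orbT.
  by case/orP => /eqP ->; [exists u | exists v]; rewrite ?Ee ?inE ?eqxx ?orbT.
Qed.


Lemma open_hull S z : in_open p S z -> in_hull p S z.
Proof.
case=> w [h0 hp hs hc]; exists w; split => // i.
by case iS: (i \in S); [apply: ltW; apply: hp | rewrite h0 ?iS].
Qed.

Lemma Dneq0 (x y : R) : x * y < 0 -> x != 0 /\ y != 0.
Proof.
move=> h; split; apply/eqP => E; move: h; rewrite E ?mul0r ?mulr0 ltxx //.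
Qed.

Lemma set3C12 (a b c : 'I_n) : [set a; b; c] = [set b; a; c].
Proof. by apply/setP => x; rewrite !inE; case: (x == a); case: (x == b). Qed.

Lemma DswapAB (A B C : 'rV[R]_2) : Dv B A C = - Dv A B C.
Proof. by rewrite /Dv; ring. Qed.

Lemma good_flip T e : good T -> admissible p T e -> good (do_flip T e).
Proof.
move=> gT adm; have [u [v [w1 [w2 fd]]]] := FS gT adm.
case: fd => uv uw1 uw2 vw1 vw2 w12 Ee t1T t2T tris diag fl dd ee.
case: gT => G1 G2.
have [D1 D2] := Dneq0 dd; have [Eu Ev] := Dneq0 ee.
have wu1 : w1 != u by rewrite eq_sym. have wv1 : w1 != v by rewrite eq_sym.
have wu2 : w2 != u by rewrite eq_sym. have wv2 : w2 != v by rewrite eq_sym.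
have w21 : w2 != w1 by rewrite eq_sym. have vu : v != u by rewrite eq_sym.
have N1 : forall z, in_hull p [set w1; w2; u] z ->
    in_hull p [set u; v; w1] z \/ in_hull p [set u; v; w2] z.
  move=> z; rewrite hull3S // => hz.
  by case: (cover4 ee dd hz) => h; [left|right]; rewrite hull3S.
have N2 : forall z, in_hull p [set w1; w2; v] z ->
    in_hull p [set u; v; w1] z \/ in_hull p [set u; v; w2] z.
  move=> z; rewrite set3C12 hull3S //; last first.
    by rewrite DswapAB oppr_eq0.
  move=> hz.
  have ee' : Dv (p w2) (p w1) (p v) * Dv (p w2) (p w1) (p u) < 0.
    by move: ee; rewrite /Dv; congr (_ < 0); ring.
  have dd' : Dv (p v) (p u) (p w2) * Dv (p v) (p u) (p w1) < 0.
    by move: dd; rewrite /Dv; congr (_ < 0); ring.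
  case: (cover4 ee' dd' hz) => h; [right|left]; rewrite set3C12 hull3S //.
  - by rewrite DswapAB oppr_eq0.
  - by rewrite DswapAB oppr_eq0.
have O : forall t z tk, t \in T -> ~~ (e \subset t) -> tk \in T -> e \subset tk ->
    in_open p t z -> in_hull p tk z -> False.
  move=> t z tk tT et tkT etk ot hk.
  have [c3 ai] := G1 _ tT; have [c3k aik] := G1 _ tkT.
  have [a [b [c [ab ac bc Et]]]] := card3 c3.
  have [a' [b' [c' [ab' ac' bc' Ek]]]] := card3 c3k.
  have Dt : Dv (p a) (p b) (p c) != 0 by apply: aff_indep_D => //; rewrite -Et.
  have Dk : Dv (p a') (p b') (p c') != 0 by apply: aff_indep_D => //; rewrite -Ek.
  move: ot hk; rewrite Et Ek open3S // hull3S // => ot hk.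
  have [z' [z1 z2]] := perturb Dk hk ot.
  apply: (G2 tk t z' tkT tT).
  - by apply/eqP => E; move: et; rewrite -E etk.
  - by rewrite Ek open3S.
  - by rewrite Et open3S.
have O' : forall t z, t \in T -> ~~ (e \subset t) -> in_open p t z ->
    in_hull p [set w1; w2; u] z \/ in_hull p [set w1; w2; v] z -> False.
  move=> t z tT et ot hn.
  have hk : in_hull p [set u; v; w1] z \/ in_hull p [set u; v; w2] z.
    by case: hn => [/N1|/N2].
  have s1 : e \subset [set u; v; w1] by rewrite Ee; apply/subsetP => x; rewrite !inE => ->.
  have s2 : e \subset [set u; v; w2] by rewrite Ee; apply/subsetP => x; rewrite !inE => ->.
  by case: hk => hk; [apply: (O t z _ tT et t1T s1 ot hk) | apply: (O t z _ tT et t2T s2 ot hk)].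
have NN : forall z, in_open p [set w1; w2; u] z -> in_open p [set w1; w2; v] z -> False.
  move=> z; rewrite !open3S // => -[_ _ h1] [_ _ h2].
  have := mulr_gt0 h1 h2.
  have -> : Dv (p w1) (p w2) z * Dv (p w1) (p w2) (p u) *
     (Dv (p w1) (p w2) z * Dv (p w1) (p w2) (p v)) =
     (Dv (p w1) (p w2) z * Dv (p w1) (p w2) z) *
     (Dv (p w1) (p w2) (p u) * Dv (p w1) (p w2) (p v)) by ring.
  rewrite ltNge mulr_ge0_le0 //; last by apply: ltW.
  by rewrite -expr2 sqr_ge0.
split.
- move=> t; rewrite fl => /or3P [/andP [tT _]|/eqP ->|/eqP ->]; first exact: G1.
  + by split; [rewrite card3_set | apply: D_aff_indep].
  + by split; [rewrite card3_set | apply: D_aff_indep].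
- move=> ta tb z; rewrite !fl => /or3P [/andP [taT ea]|/eqP Ea|/eqP Ea]
    /or3P [/andP [tbT eb]|/eqP Eb|/eqP Eb] nab oa ob.
  + exact: (G2 ta tb z).
  + by apply: (O' ta z) => //; left; apply: open_hull; rewrite -Eb.
  + by apply: (O' ta z) => //; right; apply: open_hull; rewrite -Eb.
  + by apply: (O' tb z) => //; left; apply: open_hull; rewrite -Ea.
  + by move: nab; rewrite Ea Eb eqxx.
  + by apply: (NN z); rewrite -?Ea -?Eb.
  + by apply: (O' tb z) => //; right; apply: open_hull; rewrite -Ea.
  + by apply: (NN z); rewrite -?Ea -?Eb.
  + by move: nab; rewrite Ea Eb eqxx.
Qed.


Lemma hull_mono (S S' : {set 'I_n}) z : S \subset S' -> in_hull p S z -> in_hull p S' z.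
Proof.
move=> sub [w [h0 hp hs hc]]; exists w; split => // i iS; apply: h0.
by apply: contra iS; apply: (subsetP sub).
Qed.

Lemma hull2 a b s : a != b -> 0 <= s -> s <= 1 ->
  in_hull p [set a; b] (mix s (p a) (p b)).
Proof.
move=> ab s0 s1.
have ba : (b == a) = false by apply/negbTE; rewrite eq_sym.
pose w := fun i => if i == a then 1 - s else if i == b then s else 0.
have sup : forall i, i \notin [set a; b] -> w i = 0.
  by move=> i; rewrite !inE /w; repeat case: ifP => _.
have S2 : forall (V : zmodType) (G : 'I_n -> V), (forall i, i \notin [set a; b] -> G i = 0) ->
    \sum_i G i = G a + G b.
  move=> V G H; rewrite (bigD1 a) //= (bigD1 b) /=; last by rewrite eq_sym ab.
  rewrite big1 ?addr0 ?addrA // => i /andP [ia ib].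
  by apply: H; rewrite !inE (negbTE ia) (negbTE ib).
exists w; split => //.
- by move=> i; rewrite /w; repeat case: ifP => _ //; lra.
- by rewrite (S2 _ w sup) /w eqxx ba eqxx; ring.
- rewrite (S2 _ (fun i => w i *: p i)); last by move=> i /sup ->; rewrite scale0r.
  by rewrite /w eqxx ba eqxx /mix.
Qed.

Lemma final_pt (U V W1 W2 : 'rV[R]_2) :
  Dv U V W1 * Dv U V W2 < 0 -> Dv W1 W2 U * Dv W1 W2 V < 0 ->
  exists2 s, 0 < s /\ s <= 1 & openS U V W1 (mix s W1 W2).
Proof.
move=> H1 H2.
have E : Dv W1 W2 V - Dv W1 W2 U = Dv U V W1 - Dv U V W2 by rewrite /Dv; ring.
have F1 : forall s, Dv (mix s W1 W2) V W1 * Dv U V W1 = s * (Dv W1 W2 V * Dv U V W1).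
  by move=> s; rewrite /Dv /mix !(cxD, cxZ, cyD, cyZ); ring.
have F2 : forall s, Dv U (mix s W1 W2) W1 * Dv U V W1 = s * (- Dv W1 W2 U * Dv U V W1).
  by move=> s; rewrite /Dv /mix !(cxD, cxZ, cyD, cyZ); ring.
have F3 : forall s, Dv U V (mix s W1 W2) * Dv U V W1 =
    (1 - s) * (Dv U V W1 * Dv U V W1) + s * (Dv U V W2 * Dv U V W1).
  by move=> s; rewrite /Dv /mix !(cxD, cxZ, cyD, cyZ); ring.
move: H1 H2 E F1 F2 F3; set d1 := Dv U V W1; set d2 := Dv U V W2;
  set eu := Dv W1 W2 U; set ev := Dv W1 W2 V => H1 H2 E F1 F2 F3.
have [D1 _] := Dneq0 H1.
have [e0 e00 He] := eps_and (eps_half R) (eps1 (d2 * d1) (sqr_pos D1)).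
have [s0 [s00 [sh k]]] : exists s, 0 < s /\ (s <= 1/2 /\
   0 < (1 - s) * (d1 * d1) + s * (d2 * d1)) by exists e0; split => //; apply: He.
have P : 0 < ev * d1 /\ 0 < - eu * d1.
  have [d1p|d1n] := ltP 0 d1.
  - have d2n : d2 < 0 by rewrite -(pmulr_rlt0 _ d1p).
    have eun : eu < 0.
      rewrite ltNge; apply/negP => h.
      have evp : 0 < ev by lra.
      by move: H2; rewrite ltNge mulr_ge0 // ltW.
    have evp : 0 < ev by rewrite -(nmulr_rlt0 _ eun).
    by split; apply: mulr_gt0 => //; rewrite oppr_gt0.
  - have d1n' : d1 < 0.
      by rewrite lt_neqAle d1n andbT.
    move: d1n' => {}d1n.
    have d2p : 0 < d2 by rewrite -(nmulr_rlt0 _ d1n).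
    have eup : 0 < eu.
      rewrite ltNge; apply/negP => h.
      have evn : ev < 0 by lra.
      by move: H2; rewrite ltNge mulr_le0 // ltW.
    have evn : ev < 0 by rewrite -(pmulr_rlt0 _ eup).
    by split; rewrite (nmulr_lgt0 _ d1n) // oppr_lt0.
exists s0; first by split => //; lra.
rewrite /openS F1 F2 F3; case: P => P1 P2; split => //; by apply: mulr_gt0.
Qed.


Lemma flip_cover T e u v w1 w2 t z : FD T e u v w1 w2 -> t \in T -> e \subset t ->
  in_hull p t z -> in_hull p [set w1; w2; u] z \/ in_hull p [set w1; w2; v] z.
Proof.
case=> uv uw1 uw2 vw1 vw2 w12 Ee t1T t2T tris diag fl dd ee tT et.
have [D1 D2] := Dneq0 dd; have [Eu Ev] := Dneq0 ee.
have wu1 : w1 != u by rewrite eq_sym. have wv1 : w1 != v by rewrite eq_sym.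
have wu2 : w2 != u by rewrite eq_sym. have wv2 : w2 != v by rewrite eq_sym.
have w21 : w2 != w1 by rewrite eq_sym.
case: (tris t tT et) => ->.
- rewrite hull3S // => hz.
  by case: (cover4 dd ee hz) => h; [left|right]; rewrite hull3S.
- rewrite hull3S // => hz.
  have dd' : Dv (p u) (p v) (p w2) * Dv (p u) (p v) (p w1) < 0 by rewrite mulrC.
  have ee' : Dv (p w2) (p w1) (p u) * Dv (p w2) (p w1) (p v) < 0.
    by rewrite (DswapAB (p w1) (p w2) (p u)) (DswapAB (p w1) (p w2) (p v)) mulrNN.
  case: (cover4 dd' ee' hz) => h; [left|right]; rewrite set3C12 hull3S //;
    by rewrite DswapAB oppr_eq0.
Qed.

End Flip.


Lemma tri_afterS n (T : {set {set 'I_n}}) F t : (t < size F)%N ->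
  tri_after T F t.+1 = do_flip (tri_after T F t) (eps F t).
Proof. by move=> ht; rewrite /tri_after (take_nth set0) // foldl_rcons. Qed.

Lemma good_all (R : realFieldType) n (p : 'I_n -> 'rV[R]_2) T F :
  good p T -> valid p T F -> forall t, (t <= size F)%N -> good p (tri_after T F t).
Proof.
move=> gT vF; elim=> [|t IH] ht; first by rewrite /tri_after take0.
rewrite tri_afterS //; apply: good_flip; first by apply: IH; apply: ltnW.
exact: vF.
Qed.

Theorem lemma4 (R : realFieldType) (n : nat) (p : 'I_n -> 'rV[R]_2)
  (Tinit Tfinal : {set {set 'I_n}}) (F : seq {set 'I_n})
  (i h : 'I_(size F)) :
  injective p ->
  normalized p Tinit Tfinal F ->
  same_comp Tinit F i h ->
  (i < h)%N ->
  phi_at Tinit F h = eps F i ->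
  (forall q : nat, (i < q < h)%N -> eps F q != eps F i) ->
  connect (DF Tinit F) i h.
Proof.
move=> _ [[trI _ [vF _] _] _ _] _ hi hphi _.
have gI : good p Tinit by case: trI => A _ C _; split.
set T := tri_after Tinit F.
have gT : forall t, (t <= size F)%N -> good p (T t) := good_all gI vF.
pose marked (t : nat) (tau : {set 'I_n}) :=
  tau \in T t /\ exists q : 'I_(size F), [/\ (i <= q < t)%N, connect (DF Tinit F) i q,
     phi_at Tinit F q \subset tau &
     forall r, (q < r < t)%N -> eps F r != phi_at Tinit F q].
have adj : forall (tt : 'I_(size F)) tau, marked tt tau -> eps F tt \subset tau ->
    connect (DF Tinit F) i tt.
  move=> tt tau [tauT [q [/andP [iq qt] rq sq nq]]] et.
  apply: (connect_trans rq); apply: connect1.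
  rewrite /DF /flip_adj qt ltn_ord /=; apply/andP; split.
    case: (eqVneq (phi_at Tinit F q) (eps F tt)) => E //=; apply/existsP; exists tau.
    by rewrite tauT sq et.
  apply/allP => r; rewrite mem_iota => /andP [h1 h2]; apply: nq.
  by rewrite h1 /=; move: h2; rewrite subnKC.
pose Cov (t : nat) := forall z, in_hull p (eps F i) z ->
   exists tau, marked t tau /\ in_hull p tau z.
have CovS : forall t, (i <= t)%N -> (t < size F)%N -> 
    (forall z, in_hull p (eps F i) z -> exists tau, [/\ tau \in T t,
       (exists q : 'I_(size F), [/\ (i <= q <= t)%N, connect (DF Tinit F) i q,
         phi_at Tinit F q \subset tau & forall r, (q < r < t)%N -> eps F r != phi_at Tinit F q])
       & in_hull p tau z]) -> Cov t.+1.
  move=> t it ts H z hz.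
  have [tau [tauT [q [/andP [iq qt] rq sq nq]] hz']] := H z hz.
  have [u [v [w1 [w2 fd]]]] := FS (gT _ (ltnW ts)) (vF _ ts).
  have Tt1 : T t.+1 = do_flip (T t) (eps F t) by rewrite /T tri_afterS.
  case et: (eps F t \subset tau).
  - have mk : marked t tau \/ q = t :> nat.
      case: (ltngtP q t) qt => // qt' _; [left|right] => //.
      by split => //; exists q; split => //; rewrite iq.
    have rt : connect (DF Tinit F) i (Ordinal ts).
      case: mk => [mk|qe]; first by apply: (adj (Ordinal ts) tau mk et).
      by have -> : Ordinal ts = q by apply: val_inj.
    case: (flip_cover fd tauT et hz') => hn; [exists [set w1; w2; u] | exists [set w1; w2; v]];
      (split; last by []); (split; first by rewrite Tt1 (fd_flip fd) eqxx ?orbT);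
      exists (Ordinal ts); (split => //=; [by rewrite it ltnSn | | ]);
      rewrite ?ltnNge ?ltnS; try (by move=> r /andP [/leq_trans H1 /H1]; rewrite ltnn);
      by rewrite /phi_at (fd_diag fd); apply/subsetP => x; rewrite !inE => ->.
  - exists tau; split => //; split; first by rewrite Tt1 (fd_flip fd) tauT et.
    exists q; split => //; first by rewrite iq ltnS.
    move=> r /andP [qr]; rewrite ltnS leq_eqVlt => /orP [/eqP ->|rt].
      by apply: contraFneq et => ->.
    by apply: nq; rewrite qr rt.
have Cov0 : Cov i.+1.
  move=> z hz.
  have iS := ltn_ord i.
  have [u [v [w1 [w2 fd]]]] := FS (gT _ (ltnW iS)) (vF _ iS).
  have Ti1 : T i.+1 = do_flip (T i) (eps F i) by rewrite /T tri_afterS.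
  have sub : eps F i \subset [set u; v; w1].
    by rewrite (fd_e fd); apply/subsetP => x; rewrite !inE => ->.
  have hz' := hull_mono sub hz.
  case: (flip_cover fd (fd_t1 fd) sub hz') => hn; [exists [set w1; w2; u] | exists [set w1; w2; v]];
    (split; last by []); (split; first by rewrite Ti1 (fd_flip fd) eqxx ?orbT);
    exists i; (split => //=; [by rewrite leqnn ltnSn | | ]);
    try (by move=> r /andP [/leq_trans H1 /H1]; rewrite ltnn);
    by rewrite /phi_at (fd_diag fd); apply/subsetP => x; rewrite !inE => ->.
have CovAll : forall d, (i.+1 + d <= h)%N -> Cov (i.+1 + d)%N.
  elim=> [|d IH] hd; first by rewrite addn0.
  rewrite addnS; apply: CovS.
  - by apply: leq_trans (leq_addr _ _); apply: ltnW.
  - by move: hd (ltn_ord h); rewrite addnS; lia.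
  have hd' : (i.+1 + d <= h)%N by move: hd; lia.
  move=> z hz; have [tau [[tauT [q [/andP [iq qt] rq sq nq]]] hz']] := IH hd' z hz.
  by exists tau; split => //; exists q; split => //; rewrite iq ltnW.
have Covh : Cov h by have := CovAll (h - i.+1)%N; rewrite subnKC //; apply.
have hS := ltn_ord h.
have [u [v [w1 [w2 fd]]]] := FS (gT _ (ltnW hS)) (vF _ hS).
have [s [s0 s1] oq] := final_pt (fd_d fd) (fd_ee fd).
have hq : in_hull p (eps F i) (mix s (p w1) (p w2)).
  rewrite -hphi /phi_at (fd_diag fd); apply: hull2; first exact: (fd_w12 fd).
    exact: ltW.
  exact: s1.
have [tau [[tauT [q [/andP [iq qh] rq sq nq]]] htau]] := Covh _ hq.
have [G1 G2] := gT _ (ltnW hS).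
have [c3 ai] := G1 _ tauT.
have [a [b [c [ab ac bc Et]]]] := card3 c3.
have Dt : Dv (p a) (p b) (p c) != 0 by apply: aff_indep_D => //; rewrite -Et.
move: htau; rewrite Et hull3S // => htau.
have [z' [z1 z2]] := perturb Dt htau oq.
have Dk : Dv (p u) (p v) (p w1) != 0 by case: (Dneq0 (fd_d fd)).
have tauE : tau = [set u; v; w1].
  apply/eqP; apply/negPn/negP => ne.
  apply: (G2 tau [set u; v; w1] z' tauT (fd_t1 fd) ne).
    by rewrite Et open3S.
  by rewrite open3S //; [exact: (fd_uv fd) | exact: (fd_uw1 fd) | exact: (fd_vw1 fd)].
apply: (adj h tau); first by split => //; exists q; split => //; rewrite iq.
by rewrite tauE (fd_e fd); apply/subsetP => x; rewrite !inE => ->.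
Qed.
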